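(* Let $G=(V,E,\mathcal{W})$ be a coherent matrix-weighted network as described in the context whose underlying undirected graph is not bipartite, and consider the random walk dynamics $\mathbf{y}_j(t+1)=\sum_i \mathbf{W}_{ij}^T\mathbf{y}_i(t)/d_i$, $j=1,\dots,n$, i.e. $\mathbf{y}(t+1)=\mathcal{P}^T\mathbf{y}(t)$ with $\mathcal{P}=\mathcal{D}^{-1}\mathcal{W}$ and $\mathbf{y}=(\mathbf{y}_1;\dots;\mathbf{y}_n)$, $\mathbf{y}_i\in\mathbb{R}^{n_d}$, with initial vectors $\mathbf{y}_i(0)$. Then for each node $v_j$, $\mathbf{y}_j(t)\to\mathbf{y}_j^*$ as $t\to\infty$, where $$\mathbf{y}_j^{*T}=\bar{\mathbf{y}}(0)^T\mathbf{S}_{1\sigma(j)}\,d_j/(2m),\qquad \bar{\mathbf{y}}(0)^T=\sum_{i=1}^n\mathbf{y}_i(0)^T\mathbf{S}_{\sigma(i)1},\qquad 2m=\sum_j d_j.$$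
   Context: A matrix-weighted network (MWN) is $G=(V,E,\mathcal{W})$ with node set $V=\{v_1,\dots,v_n\}$ and edge set $E\subset V\times V$, whose underlying graph is connected. For a fixed dimension $n_d$, each ordered pair $(i,j)$ carries $\mathbf{W}_{ij}\in\mathbb{R}^{n_d\times n_d}$, with $\mathbf{W}_{ij}=0$ iff $(v_i,v_j)\notin E$, and $\mathbf{W}_{ij}=\mathbf{W}_{ji}^T$. Write $w_{ij}=\|\mathbf{W}_{ij}\|_2$ and, for edges, $\mathbf{R}_{ij}=\mathbf{W}_{ij}/w_{ij}$ (transformation of the edge). $\mathcal{W}$ is the $nn_d\times nn_d$ block matrix with blocks $\mathbf{W}_{ij}$; $d_i=\sum_j w_{ij}$, $\mathcal{D}=\mathrm{diag}(d_i)\otimes\mathbf{I}$ ($\mathbf{I}$ the $n_d\times n_d$ identity). The transformation of a directed path or cycle with consecutive edges $e_1,\dots,e_k$ is $\mathbf{R}(e_1)\cdots\mathbf{R}(e_k)$; $G$ is coherent if every directed cycle $(v_{i_1},v_{i_2}),\dots,(v_{i_l},v_{i_1})$ ($l\ge2$, distinct nodes) has transformation $\mathbf{I}$. For coherent $G$ there is a partition $\{V_1,\dots,V_{l_p}\}$ of $V$ such that edges inside a part have transformation $\mathbf{I}$, all edges from a part $V_a$ to a part $V_b$ share the same transformation, and every directed cycle of parts (as super nodes) has transformation $\mathbf{I}$. For such a partition, $\sigma(i)$ is the index of the part containing $v_i$, and $\mathbf{S}_{hl}$ is the transformation of a directed path from a node of $V_h$ to a node of $V_l$. *)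

(* Defs.v *)
From HB Require Import structures.
From mathcomp Require Import all_boot all_order all_algebra.
From mathcomp Require Import all_classical all_reals all_analysis.
Set Implicit Arguments. Unset Strict Implicit. Unset Printing Implicit Defensive.
Import Order.TTheory GRing.Theory Num.Theory.
Import numFieldNormedType.Exports.
Local Open Scope classical_set_scope.
Local Open Scope ring_scope.

Section MWN.
Variables (R : realType) (n nd : nat).
Variable W : 'I_n -> 'I_n -> 'M[R]_nd.

Definition vnorm2 (x : 'cV[R]_nd) : R := Num.sqrt (\sum_k x k 0 ^+ 2).

Definition specnorm (A : 'M[R]_nd) : R :=
  sup [set vnorm2 (A *m x) | x in [set x : 'cV[R]_nd | vnorm2 x <= 1]].

Definition edge : rel 'I_n := fun i j => W i j != 0.

Definition wgt i j : R := specnorm (W i j).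

Definition Rtr i j : 'M[R]_nd := (wgt i j)^-1 *: W i j.

Definition deg i : R := \sum_j wgt i j.

Definition two_m : R := \sum_j deg j.

Fixpoint ptrans (x : 'I_n) (p : seq 'I_n) : 'M[R]_nd :=
  match p with
  | [::] => 1%:M
  | y :: p' => Rtr x y *m ptrans y p'
  end.

Definition mw_symmetric := forall i j, W i j = (W j i)^T.

Definition mw_connected := forall i j, connect edge i j.

Definition mw_bipartite := exists c : 'I_n -> bool,
  forall i j, edge i j -> c i != c j.

Definition coherent := forall (x : 'I_n) (p : seq 'I_n),
  uniq (x :: p) -> (0 < size p)%N -> path edge x p -> edge (last x p) x ->
  ptrans x (rcons p x) = 1%:M.

(* A partition {V_1,...,V_{lp}} given by sigma : V -> parts (part V_1 is
   index ord0), with the properties of the context. *)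
Definition coherent_partition (lp : nat) (sigma : 'I_n -> 'I_lp.+1) :=
  [/\
      forall a, exists i, sigma i = a,
      forall i j, edge i j -> sigma i = sigma j -> Rtr i j = 1%:M,
      forall i j i' j', edge i j -> edge i' j' -> sigma i = sigma i' ->
        sigma j = sigma j' -> Rtr i j = Rtr i' j' &
      (* every directed cycle of (distinct) parts has transformation I:
         s lists one edge from V_{a_t} to V_{a_{t+1}} for each step *)
      forall s : seq ('I_n * 'I_n), (1 < size s)%N ->
        all (fun e => edge e.1 e.2) s ->
        uniq [seq sigma e.1 | e <- s] ->
        cycle (fun e f => sigma e.2 == sigma f.1) s ->
        foldr (fun e M => Rtr e.1 e.2 *m M) 1%:M s = 1%:M].

Definition part_transf (lp : nat) (sigma : 'I_n -> 'I_lp.+1)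
  (S : 'I_lp.+1 -> 'I_lp.+1 -> 'M[R]_nd) :=
  forall (x : 'I_n) (p : seq 'I_n),
    uniq (x :: p) -> path edge x p ->
    ptrans x p = S (sigma x) (sigma (last x p)).

Fixpoint rw (y0 : 'I_n -> 'cV[R]_nd) (t : nat) : 'I_n -> 'cV[R]_nd :=
  match t with
  | 0 => y0
  | t'.+1 => fun j => \sum_i (deg i)^-1 *: ((W i j)^T *m rw y0 t' i)
  end.

End MWN.

(* Main.v *)
Require Import Defs.
From HB Require Import structures.
From mathcomp Require Import all_boot all_order all_algebra.
From mathcomp Require Import all_classical all_reals all_analysis.
Set Implicit Arguments. Unset Strict Implicit. Unset Printing Implicit Defensive.
Import Order.TTheory GRing.Theory Num.Theory.
Import numFieldNormedType.Exports.
Local Open Scope classical_set_scope.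
Local Open Scope ring_scope.
From mathcomp Require Import ring lra zify.
Lemma exists_argmin (R : realType) (T : finType) (t0 : T) (f : T -> R) :
  exists t, forall t', f t <= f t'.
Proof.
case: (@arg_minP _ R T t0 xpredT f erefl) => t _ H.
by exists t => t'; apply: H.
Qed.

Lemma vnorm2_mul (R : realType) nd (M : 'M[R]_nd) k (x : 'cV[R]_nd) :
  0 <= k -> M^T *m M = k%:M -> vnorm2 (M *m x) = Num.sqrt k * vnorm2 x.
Proof.
move=> k0 hM; rewrite /vnorm2 -sqrtrM //; congr Num.sqrt.
have E : forall y : 'cV[R]_nd, \sum_k0 y k0 0 ^+ 2 = (y^T *m y) 0 0.
  by move=> y; rewrite mxE; apply: eq_bigr => i _; rewrite mxE expr2.
rewrite !E trmx_mul -mulmxA (mulmxA M^T) hM mul_scalar_mx -scalemxAr mxE.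
done.
Qed.

Lemma specnorm_sc (R : realType) nd (M : 'M[R]_nd) k :
  (0 < nd)%N -> 0 <= k -> M^T *m M = k%:M -> specnorm M = Num.sqrt k.
Proof.
move=> nd0 k0 hM.
rewrite /specnorm; set E := (X in sup X).
have ub : ubound E (Num.sqrt k).
  move=> _ [x /= hx <-]; rewrite (vnorm2_mul _ k0 hM).
  by rewrite -[leRHS]mulr1 ler_wpM2l ?sqrtr_ge0.
pose i0 : 'I_nd := Ordinal nd0.
pose e : 'cV[R]_nd := delta_mx i0 0.
have he : vnorm2 e = 1.
  rewrite /vnorm2 (bigD1 i0) //= big1 ?addr0.
    by rewrite mxE !eqxx /= expr1n sqrtr1.
  by move=> i /negbTE hi; rewrite mxE hi /= expr0n.
have inE : E (Num.sqrt k).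
  by exists e; rewrite /= ?he // (vnorm2_mul _ k0 hM) he mulr1.
apply/eqP; rewrite eq_le; apply/andP; split.
  by apply: ge_sup => //; exists (Num.sqrt k).
apply: sup_upper_bound => //; split; first by exists (Num.sqrt k).
by exists (Num.sqrt k).
Qed.
Section PartA.
Variables (R : realType) (n nd : nat) (W : 'I_n -> 'I_n -> 'M[R]_nd)
  (lp : nat) (sigma : 'I_n -> 'I_lp.+1) (S : 'I_lp.+1 -> 'I_lp.+1 -> 'M[R]_nd).
Hypotheses (hsym : mw_symmetric W) (hconn : mw_connected W) (hcoh : coherent W)
  (hpart : coherent_partition W sigma) (hS : part_transf W sigma S).

Lemma ptrans_cat x p q :
  ptrans W x (p ++ q) = ptrans W x p *m ptrans W (last x p) q.
Proof.
elim: p x => [|y p IH] x /=; first by rewrite mul1mx.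
by rewrite IH mulmxA.
Qed.

Lemma edge_sym i j : edge W i j -> edge W j i.
Proof.
rewrite /edge (hsym j i) => h; apply/eqP => /(congr1 trmx).
by rewrite trmxK trmx0; apply/eqP.
Qed.

Lemma simple_path x y : exists p,
  [/\ uniq (x :: p), path (edge W) x p & last x p = y].
Proof.
case/connectP: (hconn x y) => p hp hl.
case: (shortenP hp) hl => p' hp' hu _ hl.
by exists p'.
Qed.

Variable r : 'I_n.
Hypothesis hr : sigma r = ord0.

Lemma keyK i j : edge W i j ->
  Rtr W i j *m S (sigma j) ord0 = S (sigma i) ord0.
Proof.
move=> eij.
case: hpart => hsurj hin _ _.
have [p [hu hp hl]] := simple_path j r.
have Sj : ptrans W j p = S (sigma j) ord0 by rewrite (hS hu hp) hl hr.
case: (eqVneq i j) => [eq_ij|hij].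
  by subst j; rewrite (hin i i eij erefl) mul1mx.
case: (boolP (i \in p)) => hip; last first.
  have hu' : uniq (i :: j :: p) by rewrite /= inE negb_or hij hip.
  have hp' : path (edge W) i (j :: p) by rewrite /= eij.
  have := hS hu' hp'; rewrite /= Sj => ->.
  by rewrite hl hr.
move: hu hp hl Sj; case/splitPr: hip => p1 p2 hu hp hl Sj.
rewrite cat_path /= in hp; case/and3P: hp => hp1 he hp2.
have hu2 : uniq (i :: p2).
  by move: hu; rewrite cons_uniq cat_uniq => /andP[_ /and3P[_ _ ->]].
have Hi2 : ptrans W i p2 = S (sigma i) ord0.
  by rewrite (hS hu2 hp2) -hr -hl last_cat.
have hu1 : uniq (i :: j :: p1).
  move: hu; rewrite cons_uniq mem_cat negb_or cat_uniq => /andP[/andP[hj _]].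
  move=> /and3P[hp1u /hasPn hn _].
  rewrite !cons_uniq hp1u inE negb_or hij hj !andbT /=.
  by apply: (hn i); rewrite inE eqxx.
have hpc : path (edge W) i (j :: p1) by rewrite /= eij.
have hc := hcoh hu1 erefl hpc he.
rewrite /= in hc.
rewrite -Sj -Hi2 -cat_rcons ptrans_cat last_rcons mulmxA.
by rewrite -[ptrans W j (rcons p1 i)]/(ptrans W j (rcons p1 i)) hc mul1mx.
Qed.

Definition T i := S (sigma i) ord0.
Definition U i := S ord0 (sigma i).

Lemma Tr1 : T r = 1%:M.
Proof.
rewrite /T -hr; have := @hS r [::] erefl erefl.
by rewrite /= => <-.
Qed.

Lemma ptransT x p : path (edge W) x p -> ptrans W x p *m T (last x p) = T x.
Proof.
elim: p x => [|y p IH] x /=; first by rewrite mul1mx.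
by case/andP=> exy hp; rewrite -mulmxA IH // keyK.
Qed.

Lemma UT j : U j *m T j = 1%:M.
Proof.
have [p [hu hp hl]] := simple_path r j.
have := ptransT hp; rewrite hl Tr1 (hS hu hp) hl hr.
done.
Qed.

Lemma TU j : T j *m U j = 1%:M.
Proof. exact: mulmx1C (UT j). Qed.

Lemma Rtr_TU i j : edge W i j -> Rtr W i j = T i *m U j.
Proof.
move=> e; rewrite -[Rtr W i j]mulmx1 -(TU j) mulmxA.
by rewrite /T keyK.
Qed.

Hypothesis nd0 : (0 < nd)%N.

Lemma one_neq0 : (1%:M : 'M[R]_nd) != 0.
Proof.
apply/eqP => /matrixP /(_ (Ordinal nd0) (Ordinal nd0)).
by rewrite !mxE eqxx /=; apply/eqP; rewrite oner_eq0.
Qed.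

Lemma wgt_edge i j : edge W i j -> wgt W i j != 0.
Proof.
move=> e; apply/eqP => w0.
have : Rtr W i j = 0 by rewrite /Rtr w0 invr0 scale0r.
rewrite Rtr_TU // => h.
have : T i *m U j *m (T j *m U i) = 1%:M.
  by rewrite mulmxA -(mulmxA (T i)) UT mulmx1 TU.
rewrite h mul0mx => /esym /eqP; rewrite (negbTE one_neq0).
done.
Qed.

Lemma W_eq i j : edge W i j -> W i j = wgt W i j *: (T i *m U j).
Proof.
move=> e; rewrite -Rtr_TU // /Rtr scalerA divff ?scale1r //.
exact: wgt_edge.
Qed.

Lemma wgt_prop i j :
  [/\ wgt W i j = wgt W j i, 0 <= wgt W i j & (~~ edge W i j -> wgt W i j = 0)].
Proof.
case: (boolP (edge W i j)) => e; last first.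
  have W0 : W i j = 0 by move: e; rewrite /edge negbK => /eqP.
  have W0' : W j i = 0 by rewrite hsym W0 trmx0.
  have sp0 : specnorm (0 : 'M[R]_nd) = 0.
    by rewrite (@specnorm_sc _ _ _ 0) ?sqrtr0 // trmx0 mul0mx -scalemx1 scale0r.
  by rewrite /wgt W0 W0' sp0.
have e' := edge_sym e.
set a := wgt W i j; set b := wgt W j i.
have h1 : (W i j)^T *m W i j = (b * a)%:M.
  rewrite -hsym (W_eq e) (W_eq e') -/a -/b -scalemxAl -scalemxAr scalerA.
  by rewrite mulmxA -(mulmxA (T j)) UT mulmx1 TU scalemx1.
have h2 : (W j i)^T *m W j i = (a * b)%:M.
  rewrite -hsym (W_eq e) (W_eq e') -/a -/b -scalemxAl -scalemxAr scalerA.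
  by rewrite mulmxA -(mulmxA (T i)) UT mulmx1 TU scalemx1.
have k0 : 0 <= b * a.
  have := congr1 (fun M : 'M[R]_nd => M (Ordinal nd0) (Ordinal nd0)) h1.
  rewrite !mxE eqxx mulr1n => <-; apply: sumr_ge0 => l _.
  by rewrite mxE -expr2 sqr_ge0.
have ha : a = Num.sqrt (b * a) by exact: (specnorm_sc nd0 k0 h1).
have hb : b = Num.sqrt (a * b) by apply: (specnorm_sc nd0 _ h2); rewrite mulrC.
split => //; first by apply: (etrans ha); rewrite mulrC -hb.
  by rewrite ha sqrtr_ge0.
Qed.

End PartA.

Lemma contr (R : realType) n (Q : 'M[R]_n) (dl : R) (v : 'cV[R]_n) (B : R) :
  0 <= dl -> (forall i l, dl <= Q i l) -> (forall i l, 0 <= Q i l) ->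
  (forall i, \sum_l Q i l = 1) -> (forall i k, v i 0 - v k 0 <= B) ->
  forall i k, (Q *m v) i 0 - (Q *m v) k 0 <= (1 - dl) * B.
Proof.
move=> dl0 hdl hQ0 hQ1 hB i k.
have [lm hlm] := exists_argmin i (fun l => v l 0).
have [lM hlM] := exists_argmin i (fun l => - v l 0).
have hlM' : forall l, v l 0 <= v lM 0 by move=> l; have := hlM l; lra.
rewrite !mxE.
have e1 : \sum_l Q i l * v l 0 = v lM 0 - \sum_l Q i l * (v lM 0 - v l 0).
  rewrite -[X in X - _]mul1r -(hQ1 i) mulr_suml -sumrB.
  by apply: eq_bigr => l _; rewrite mulrBr opprB addrC subrK.
have b1 : Q i lm * (v lM 0 - v lm 0) <= \sum_l Q i l * (v lM 0 - v l 0).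
  rewrite (bigD1 lm) //= lerDl; apply: sumr_ge0 => l _.
  by apply: mulr_ge0 => //; rewrite subr_ge0.
have e2 : \sum_l Q k l * v l 0 = v lm 0 + \sum_l Q k l * (v l 0 - v lm 0).
  rewrite -[X in X + _]mul1r -(hQ1 k) mulr_suml -big_split /=.
  by apply: eq_bigr => l _; rewrite mulrBr addrC subrK.
have b2 : 0 <= \sum_l Q k l * (v l 0 - v lm 0).
  apply: sumr_ge0 => l _.
  by apply: mulr_ge0 => //; rewrite subr_ge0.
have b3 : dl * (v lM 0 - v lm 0) <= Q i lm * (v lM 0 - v lm 0).
  by apply: ler_wpM2r; rewrite ?subr_ge0.
have dl1 : dl <= 1.
  apply: (le_trans (hdl i lm)); rewrite -(hQ1 i) (bigD1 lm) //= lerDl.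
  by apply: sumr_ge0.
have hD : v lM 0 - v lm 0 <= B by apply: hB.
have b4 : 0 <= (1 - dl) * (B - (v lM 0 - v lm 0)).
  by apply: mulr_ge0; lra.
rewrite e1 e2; lra.
Qed.

Module PB.
Section PartB.
Variables (R : realType) (n : nat) (w : 'I_n -> 'I_n -> R).
Hypotheses (hw0 : forall i j, 0 <= w i j) (hws : forall i j, w i j = w j i).
Definition e : rel 'I_n := fun i j => w i j != 0.
Hypotheses (hconn : forall i j, connect e i j)
  (hnb : ~ (exists c : 'I_n -> bool, forall i j, e i j -> c i != c j)).

Definition dg i := \sum_j w i j.

Lemma e_sym i j : e i j = e j i.
Proof. by rewrite /e hws. Qed.

Lemma w_gt0 i j : e i j -> 0 < w i j.
Proof. by rewrite /e lt_def => ->; rewrite hw0. Qed.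

Lemma some_edge : exists a b, e a b.
Proof.
case: (pselect (exists a b, e a b)) => // H; exfalso; apply: hnb.
by exists (fun _ => true) => i j eij; exfalso; apply: H; exists i, j.
Qed.

Lemma neighbor x : exists u, e x u.
Proof.
have [a [b eab]] := some_edge.
case/connectP: (hconn x a) => p hp hl.
case: p hp hl => [|y p] /=; first by move=> _ <-; exists b.
by case/andP=> exy _ _; exists y.
Qed.

Lemma dg_gt0 i : 0 < dg i.
Proof.
have [u eu] := neighbor i.
rewrite /dg (bigD1 u) //=.
have := w_gt0 eu; have : 0 <= \sum_(j | j != u) w i j by apply: sumr_ge0.
lra.
Qed.

Definition P : 'M[R]_n := \matrix_(i, j) (w i j / dg i).

Lemma P_ge0 i j : 0 <= P i j.
Proof. by rewrite mxE divr_ge0 // ltW // dg_gt0. Qed.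

Lemma P_sum i : \sum_j P i j = 1.
Proof.
under eq_bigr do rewrite mxE.
by rewrite -mulr_suml divff // gt_eqF // dg_gt0.
Qed.

Lemma Pk_ge0 k i j : 0 <= (P ^+ k) i j.
Proof.
elim: k i j => [|k IH] i j; first by rewrite expr0 mxE; case: (i == j).
rewrite exprS -mulmxE mxE; apply: sumr_ge0 => l _.
by apply: mulr_ge0; rewrite ?P_ge0.
Qed.

Lemma Pk_sum k i : \sum_j (P ^+ k) i j = 1.
Proof.
elim: k i => [|k IH] i.
  rewrite expr0 (bigD1 i) //= big1 ?mxE ?eqxx ?addr0 // => j hj.
  by rewrite mxE eq_sym (negbTE hj).
rewrite exprS -mulmxE.
under eq_bigr do rewrite mxE.
rewrite exchange_big /= -(P_sum i); apply: eq_bigr => l _.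
by rewrite -mulr_sumr IH mulr1.
Qed.

Definition pos k x y := 0 < (P ^+ k) x y.

Lemma pos0 x : pos 0 x x.
Proof. by rewrite /pos expr0 mxE eqxx. Qed.

Lemma pos1 x y : e x y -> pos 1 x y.
Proof.
move=> exy; rewrite /pos expr1 mxE divr_gt0 ?dg_gt0 //.
exact: w_gt0.
Qed.

Lemma posD a b x u y : pos a x u -> pos b u y -> pos (a + b) x y.
Proof.
move=> h1 h2; rewrite /pos exprD -mulmxE mxE (bigD1 u) //=.
have : 0 <= \sum_(l | l != u) (P ^+ a) x l * (P ^+ b) l y.
  by apply: sumr_ge0 => l _; apply: mulr_ge0; apply: Pk_ge0.
have := mulr_gt0 h1 h2; lra.
Qed.

Lemma pos_path x p : path e x p -> pos (size p) x (last x p).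
Proof.
elim: p x => [|y p IH] x /=; first by move=> _; apply: pos0.
case/andP => exy hp; rewrite -add1n.
exact: posD (pos1 exy) (IH _ hp).
Qed.

Lemma reach x y : exists a, pos a x y /\ pos a y x.
Proof.
case/connectP: (hconn x y) => p hp ->.
exists (size p); split; first exact: pos_path.
have hr : path e (last x p) (rev (belast x p)).
  rewrite rev_path; apply: sub_path hp => a b; by rewrite e_sym.
have := pos_path hr; rewrite size_rev size_belast.
suff -> : last (last x p) (rev (belast x p)) = x by [].
case: p {hp hr} => [|y0 p] //=.
by rewrite rev_cons last_rcons.
Qed.

Lemma odd_cycle : exists r L, odd L /\ pos L r r.
Proof.
have [r _] := some_edge.
exists r.
have [f hf] := choice (fun x => reach r x).
case: (pselect (exists L, odd L /\ pos L r r)) => // H; exfalso; apply: hnb.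
exists (fun x => odd (f x)) => x y exy; apply/negP => /eqP hc; apply: H.
exists (f x + 1 + f y); split.
  by rewrite !oddD hc /=; case: (odd (f y)).
apply: posD (proj2 (hf y)).
exact: posD (proj1 (hf x)) (pos1 exy).
Qed.

Lemma primitive : exists N, forall x y, pos N x y.
Proof.
have [r [L [oL pL]]] := odd_cycle.
have [f hf] := choice (fun x => reach r x).
have [u eu] := neighbor r.
have p2 : pos 2 r r by apply: (@posD 1 1 _ u); apply: pos1; rewrite // e_sym.
have pev : forall m, pos (2 * m) r r.
  elim=> [|m IH]; first exact: pos0.
  by rewrite mulnS; apply: posD p2 IH.
have pad : forall k, (~~ odd k -> pos k r r) /\ (odd k -> (L <= k)%N -> pos k r r).
  move=> k; have hk := odd_double_half k; case: (boolP (odd k)) => ok; split => //; rewrite ?ok //.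
    move=> _ hL; have -> : k = (L + 2 * ((k - L)./2))%N.
      have := odd_double_half (k - L); rewrite oddB // oL ok /=.
      move=> h; lia.
    exact: posD pL (pev _).
  move=> _; rewrite (negbTE ok) /= in hk.
  have -> : k = (2 * k./2)%N by lia.
  exact: pev.
pose A := (\big[maxn/0%N]_(x < n) f x)%N.
exists (2 * A + 2 * L)%N => x y.
have hx : (f x <= A)%N by apply: leq_bigmax.
have hy : (f y <= A)%N by apply: leq_bigmax.
have -> : (2 * A + 2 * L = f x + (2 * A + 2 * L - f x - f y) + f y)%N by lia.
apply: posD (proj1 (hf y)).
apply: posD (proj2 (hf x)) _.
set k := (2 * A + 2 * L - f x - f y)%N.
case: (boolP (odd k)) => ok; last exact: (proj1 (pad k)).
apply: (proj2 (pad k)) => //.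
have : odd (f x + f y + k) = false.
  have -> : (f x + f y + k = 2 * (A + L))%N by rewrite /k; lia.
  by rewrite oddM.
rewrite !oddD ok.
case: (odd (f x)); case: (odd (f y)) => //= _; rewrite /k; lia.
Qed.

Section Dyn.
Variable z : nat -> 'I_n -> R.
Hypothesis hz : forall t j, z t.+1 j = \sum_i w i j / dg i * z t i.

Definition g t : 'cV[R]_n := \col_i (z t i / dg i).

Lemma g_step t : g t.+1 = P *m g t.
Proof.
apply/matrixP => j c; rewrite !mxE hz mulr_suml; apply: eq_bigr => i _.
rewrite !mxE hws; ring.

Qed.

Lemma g_iter t k : g (t + k) = P ^+ k *m g t.
Proof.
elim: k => [|k IH]; first by rewrite addn0 expr0 mul1mx.
by rewrite addnS g_step IH mulmxA mulmxE -exprS.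
Qed.

Lemma zsum t : \sum_i z t i = \sum_i z 0 i.
Proof.
elim: t => [//|t IH]; rewrite -IH.
under eq_bigr do rewrite hz.
rewrite exchange_big /=; apply: eq_bigr => i _.
rewrite -mulr_suml -mulr_suml -/(dg i) divff ?mul1r //.
by rewrite gt_eqF // dg_gt0.
Qed.

Definition Bnd t B := forall i k, g t i 0 - g t k 0 <= B.

Lemma Bnd_approx t B j : Bnd t B ->
  `|z t j - dg j / (\sum_i dg i) * \sum_i z 0 i| <= dg j * B.
Proof.
move=> hB.
have D0 : 0 < \sum_i dg i.
  rewrite (bigD1 j) //=; have := dg_gt0 j.
  have : 0 <= \sum_(i | i != j) dg i by apply: sumr_ge0 => i _; apply: ltW; apply: dg_gt0.
  lra.
have dj := dg_gt0 j.
set D := \sum_l dg l.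
have s1 : \sum_i dg i / D = 1 by rewrite -mulr_suml divff // gt_eqF.
have E : z t j - dg j / D * \sum_i z 0 i =
    dg j * \sum_i (dg i / D) * (g t j 0 - g t i 0).
  have s2 : \sum_i dg i / D * (z t i / dg i) = (\sum_i z t i) / D.
    rewrite mulr_suml; apply: eq_bigr => i _; field.
    by rewrite !gt_eqF ?dg_gt0.
  have -> : \sum_i dg i / D * (g t j 0 - g t i 0) =
      z t j / dg j * (\sum_i dg i / D) - \sum_i dg i / D * (z t i / dg i).
    rewrite mulr_sumr -sumrB; apply: eq_bigr => i _; rewrite !mxE; ring.
  rewrite s1 s2 -(zsum t); field.
  by rewrite !gt_eqF.
rewrite E normrM gtr0_norm // ler_pM2l //.
have wi : forall i, 0 <= dg i / D by move=> i; rewrite divr_ge0 ?ltW ?dg_gt0.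
rewrite ler_norml; apply/andP; split.
  rewrite -[- B]mul1r -s1 mulr_suml; apply: ler_sum => i _.
  rewrite ler_wpM2l //; have := hB i j; lra.
rewrite -[B]mul1r -s1 mulr_suml; apply: ler_sum => i _.
by rewrite ler_wpM2l.
Qed.
End Dyn.

Theorem partB : exists N dl, [/\ 0 < dl, dl <= 1 &
  forall z : nat -> 'I_n -> R,
  (forall t j, z t.+1 j = \sum_i w i j / dg i * z t i) ->
  forall B0, Bnd z 0 B0 -> forall q s j,
  `|z (q * N + s)%N j - dg j / (\sum_i dg i) * \sum_i z 0 i|
     <= dg j * ((1 - dl) ^+ q * B0)].
Proof.
have [N hN] := primitive.
have [a _] := some_edge.
have [pm hpm] := exists_argmin (a, a) (fun p => (P ^+ N) p.1 p.2).
set dl := (P ^+ N) pm.1 pm.2 in hpm.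
have dl0 : 0 < dl by apply: hN.
have dl1 : dl <= 1.
  apply: (le_trans (hpm (a, a))); rewrite /= -(Pk_sum N a) (bigD1 a) //= lerDl.
  by apply: sumr_ge0 => l _; apply: Pk_ge0.
exists N, dl; split => // z hz B0 hB0.
have st1 : forall t B, Bnd z t B -> Bnd z t.+1 B.
  move=> t B hB i k; rewrite (g_step hz).
  have := @contr R n P 0 (g z t) B (lexx 0) (fun i l => P_ge0 i l) P_ge0 P_sum hB i k.
  by rewrite subr0 mul1r.
have stN : forall t B, Bnd z t B -> Bnd z (t + N)%N ((1 - dl) * B).
  move=> t B hB i k; rewrite (g_iter hz).
  apply: (@contr R n (P ^+ N) dl (g z t) B (ltW dl0)) => //.
    by move=> i0 l; apply: (hpm (i0, l)).
  by move=> i0 l; apply: Pk_ge0.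
  by move=> i0; apply: Pk_sum.
have hq : forall q, Bnd z (q * N)%N ((1 - dl) ^+ q * B0).
  elim=> [|q IH]; first by rewrite mul0n expr0 mul1r.
  by rewrite mulSnr exprS -mulrA; apply: stN.
move=> q s j; apply: (Bnd_approx hz).
elim: s => [|s IH]; first by rewrite addn0; apply: hq.
by rewrite addnS; apply: st1.
Qed.
End PartB.
End PB.


Lemma geo (R : realType) (r : R) (eps : R) : 0 <= r < 1 -> 0 < eps -> exists q, r ^+ q <= eps.
Proof.
case/andP=> r0 r1 e0.
have := @cvg_expr R r; rewrite ger0_norm // => /(_ r1) /cvgrPdist_le /(_ eps e0).
case=> q0 _ Hq; exists q0; have := Hq q0 (leqnn q0).
rewrite sub0r normrN ger0_norm //; exact: exprn_ge0.
Qed.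

Lemma le_sum_term (R : realType) (I : finType) (F : I -> R) i :
  (forall j, 0 <= F j) -> F i <= \sum_j F j.
Proof.
move=> h; rewrite (bigD1 i) //= lerDl; exact: sumr_ge0.
Qed.

Unset Implicit Arguments.
Set Strict Implicit.
Set Printing Implicit Defensive.

Theorem proposition4 (R : realType) (n nd : nat) (W : 'I_n -> 'I_n -> 'M[R]_nd)
  (lp : nat) (sigma : 'I_n -> 'I_lp.+1) (S : 'I_lp.+1 -> 'I_lp.+1 -> 'M[R]_nd)
  (y0 : 'I_n -> 'cV[R]_nd) :
  mw_symmetric W -> mw_connected W -> ~ mw_bipartite W -> coherent W ->
  coherent_partition W sigma -> part_transf W sigma S ->
  let ybarT := \sum_i (y0 i)^T *m S (sigma i) ord0 in
  forall j : 'I_n,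
    (fun t => (rw W y0 t j)^T) @ \oo -->
      (deg W j / two_m W) *: (ybarT *m S ord0 (sigma j)).
Proof.
move=> hsym hconn hnb hcoh hpart hS ybarT j.
case: (posnP nd) => [nd0|ndpos].
  have E : forall A B : 'rV[R]_nd, A = B.
    by move=> A B; apply/matrixP => i [k hk]; exfalso; move: hk; rewrite nd0.
  set tg := (X in _ --> X).
  have -> : (fun t => (rw W y0 t j)^T) = (fun _ => tg) by apply: funext => t; apply: E.
  exact: cvg_cst.
have [hsurj _ _ _] := hpart.
have [r hr] := hsurj ord0.
pose w := wgt W.
have wp := fun i k => wgt_prop hsym hconn hcoh hpart hS hr ndpos i k.
have edge_iff : forall i k, PB.e w i k = edge W i k.
  move=> i k; rewrite /PB.e /w; case: (boolP (edge W i k)) => ek.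
    exact: (wgt_edge hconn hcoh hpart hS hr ndpos ek).
  by have [_ _ ->] := wp i k; rewrite /w ?eqxx.
have Ee : PB.e w = edge W by apply: funext=> i; apply: funext=> k; apply: edge_iff.
have hw0 : forall i k, 0 <= w i k by move=> i k; have [] := wp i k.
have hws : forall i k, w i k = w k i by move=> i k; have [] := wp i k.
have hconn' : forall i k, connect (PB.e w) i k by rewrite Ee.
have hnb' : ~ exists c : 'I_n -> bool, forall i k, PB.e w i k -> c i != c k by rewrite Ee.
have [N [dl [dl0 dl1 HB]]] := PB.partB hw0 hws hconn' hnb'.
pose Z t i := (rw W y0 t i)^T *m T sigma S i.
have Zrec : forall t k, Z t.+1 k = \sum_i (w i k / deg W i) *: Z t i.
  move=> t k; rewrite /Z /= linear_sum mulmx_suml; apply: eq_bigr => i _ /=.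
  rewrite linearZ /= trmx_mul trmxK -scalemxAl -mulmxA.
  case: (boolP (edge W i k)) => e.
    rewrite (W_eq hconn hcoh hpart hS hr ndpos e) -scalemxAl -mulmxA.
    rewrite (UT hconn hcoh hpart hS hr) mulmx1 -scalemxAr scalerA mulrC.
    done.
  have W0 : W i k = 0 by move: e; rewrite /edge negbK => /eqP.
  have [_ _ w0] := wp i k.
  by rewrite W0 mul0mx mulmx0 /w w0 // mul0r !scale0r scaler0.
pose z c t i := Z t i 0 c.
have zrec : forall c t k, z c t.+1 k = \sum_i w i k / PB.dg w i * z c t i.
  by move=> c t k; rewrite /z Zrec summxE; apply: eq_bigr => i _; rewrite mxE.
pose B0 := \sum_c \sum_i \sum_k `|z c 0 i / deg W i - z c 0 k / deg W k|.
have hB0 : forall c, PB.Bnd w (z c) 0 B0.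
  move=> c i k; rewrite /PB.g !mxE; apply: le_trans (ler_norm _) _.
  apply: (le_trans _ (le_sum_term c _)); last first.
    by move=> c'; do 2 (apply: sumr_ge0 => ? _).
  apply: (le_trans _ (le_sum_term i _)); last first.
    by move=> i'; apply: sumr_ge0 => ? _.
  exact: (le_sum_term k (fun k => normr_ge0 _)).
have EQ : forall t, (rw W y0 t j)^T = Z t j *m U sigma S j.
  by move=> t; rewrite /Z -mulmxA (TU hconn hcoh hpart hS hr) mulmx1.
pose L := (deg W j / two_m W) *: \sum_i Z 0 i.
have tgE : (deg W j / two_m W) *: (ybarT *m S ord0 (sigma j)) = L *m U sigma S j.
  by rewrite /L -scalemxAl.
rewrite tgE.
pose K := \sum_c \sum_l `|U sigma S j l c|.
have K0 : 0 <= K by do 2 (apply: sumr_ge0 => ? _).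
have B00 : 0 <= B0 by do 3 (apply: sumr_ge0 => ? _).
have dj : 0 < deg W j by have := PB.dg_gt0 hw0 hconn' hnb' j.
pose X := deg W j * B0 * K.
have X0 : 0 <= X by rewrite /X !mulr_ge0 // ltW.
apply/cvgrPdist_le => eps e0.
have [q hq] := geo (r := 1 - dl) (eps := eps / (X + 1))
   (ltac:(apply/andP; split; lra)) (ltac:(apply: divr_gt0; lra)).
exists (q * N)%N => // t /= ht.
have -> : t = (q * N + (t - q * N))%N by rewrite subnKC.
set s := (t - q * N)%N.
rewrite EQ -mulmxBl.
have ent : forall l, `|(L - Z (q * N + s)%N j) 0 l| <= deg W j * ((1 - dl) ^+ q * B0).
  move=> l; rewrite mxE [X in _ + X]mxE [X in X - _]mxE summxE distrC.
  exact: (HB (z l) (zrec l) B0 (hB0 l) q s j).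
have nE : forall M : 'rV[R]_nd, `|M| = mx_norm M by [].
rewrite nE mx_normrE; apply: bigmax_le => [|[a c] _]; first exact: ltW.
rewrite /= mxE.
apply: (le_trans (ler_norm_sum _ _ _)).
apply: (@le_trans _ _ (\sum_l deg W j * ((1 - dl) ^+ q * B0) * `|U sigma S j l c|)).
  apply: ler_sum => l _; rewrite normrM ler_wpM2r //.
  by rewrite (ord1 a); apply: ent.
rewrite -mulr_sumr.
have hK : \sum_l `|U sigma S j l c| <= K.
  exact: (le_sum_term c (fun c => sumr_ge0 _ (fun l _ => normr_ge0 _))).
have hqq : 0 <= (1 - dl) ^+ q by apply: exprn_ge0; lra.
have : deg W j * ((1 - dl) ^+ q * B0) * \sum_l `|U sigma S j l c| <= (1 - dl) ^+ q * X.
  rewrite /X.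
  have -> : deg W j * ((1 - dl) ^+ q * B0) * \sum_l `|U sigma S j l c| =
    (deg W j * (1 - dl) ^+ q * B0) * \sum_l `|U sigma S j l c| by ring.
  have -> : (1 - dl) ^+ q * (deg W j * B0 * K) = (deg W j * (1 - dl) ^+ q * B0) * K by ring.
  by apply: ler_wpM2l => //; rewrite !mulr_ge0 // ltW.
move=> h1; apply: (le_trans h1).
have : (1 - dl) ^+ q * X <= eps / (X + 1) * X by apply: ler_wpM2r.
have : eps / (X + 1) * X <= eps.
  rewrite mulrAC ler_pdivrMr; last lra.
  rewrite ler_pM2l //; lra.
move=> *; lra.
Qed.
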